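(* Let $n\geq3$ and let $S_n$ act on $V=\mathbb{C}^n$ by its natural permutation representation. The pre-Drinfeld orbifold algebra maps for this action are exactly the linear $2$-cochains $\kappa^L=\kappa^L_1+\kappa^L_{\mathrm{tri}}$, where $\kappa^L_{\mathrm{tri}}$ is as defined below for some $a,b\in\mathbb{C}$ and $\kappa^L_1$ is supported on the identity with $\kappa^L_1(e_i,e_j)=a_1(e_i-e_j)$ for some $a_1\in\mathbb{C}$.
   Context: $S_n$ acts by $\sigma e_i=e_{\sigma(i)}$; $V^g$ is the fixed space of $g$; $\mathrm{Alt}_3$ is the set of cyclic permutations of $\{1,2,3\}$. A linear $2$-cochain is $\alpha=\sum_g\alpha_gg$ with $\alpha_g:\bigwedge^2V\to V$ linear; it is $S_n$-invariant if $h(\alpha_g(v,w))=\alpha_{hgh^{-1}}(hv,hw)$. A pre-Drinfeld orbifold algebra map is an $S_n$-invariant linear 2-cochain $\kappa^L$ with $\operatorname{im}\kappa^L_g\subseteq V^g$ for all $g$ and $\sum_{\sigma\in\mathrm{Alt}_3}\kappa^L_g(v_{\sigma(2)},v_{\sigma(3)})(gv_{\sigma(1)}-v_{\sigma(1)})=0$ in $S(V)$ for all $g,v_1,v_2,v_3$. $\kappa^L_{\mathrm{tri}}$ is the linear 2-cochain supported on 3-cycles with, for each 3-cycle $(ijk)$, $\kappa^L_{(ijk)}(e_i,e_j)=\kappa^L_{(ijk)}(e_j,e_k)=\kappa^L_{(ijk)}(e_k,e_i)=a(e_i+e_j+e_k)+b\sum_{l\notin\{i,j,k\}}e_l$ and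 $\kappa^L_{(ijk)}(e_l,e_m)=0$ whenever $e_l$ or $e_m$ lies in $V^{(ijk)}$. *)

(* Defs.v *)
From HB Require Import structures.
From mathcomp Require Import all_boot all_order all_algebra all_fingroup.
From mathcomp Require Import complex.
From mathcomp Require Import Rstruct.
From mathcomp Require Import mpoly.
Set Implicit Arguments.
Unset Strict Implicit.
Unset Printing Implicit Defensive.
Import GRing.Theory.
Local Open Scope ring_scope.

Definition C : numClosedFieldType := complex Rdefinitions.R.

Notation V n := 'rV[C]_n.
Definition e {n} (i : 'I_n) : V n := delta_mx 0 i.

(* Natural permutation action: (sigma v)_j = v_(sigma^-1 j), so sigma e_i = e_(sigma i). *)
Definition act {n} (s : 'S_n) (v : V n) : V n := \row_j v 0 ((s^-1)%g j).

(* A (linear) 2-cochain: for each g, a map kappa_g : V x V -> V.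
   A linear map  /\^2 V -> V  is the same as an alternating bilinear map V x V -> V. *)
Definition cochain n := 'S_n -> V n -> V n -> V n.

Definition alt_bilinear {n} (f : V n -> V n -> V n) : Prop :=
  [/\ forall (c : C) u u' w, f (c *: u + u') w = c *: f u w + f u' w,
      forall (c : C) u w w', f u (c *: w + w') = c *: f u w + f u w'
    & forall u, f u u = 0].

Definition linear_2cochain {n} (k : cochain n) : Prop :=
  forall g, alt_bilinear (k g).

(* S_n-invariance: h (alpha_g (v,w)) = alpha_{h g h^-1} (h v, h w).
   In mathcomp, (s * t) x = t (s x), so the composite h o g o h^-1 is h^-1 * g * h. *)
Definition Sn_invariant {n} (k : cochain n) : Prop :=
  forall (h g : 'S_n) v w, act h (k g v w) = k (h^-1 * g * h)%g (act h v) (act h w).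

Definition fixed_space {n} (g : 'S_n) (v : V n) : Prop := act g v = v.

(* The symmetric algebra S(V) = C[x_1,...,x_n]; a vector v is the linear form sum_i v_i x_i. *)
Definition toS {n} (v : V n) : {mpoly C[n]} := \sum_(i < n) (v 0 i)%:MP * 'X_i.

(* Sum over the cyclic permutations sigma in Alt_3 = {id, (123), (132)} of
   kappa_g(v_{sigma 2}, v_{sigma 3}) (g v_{sigma 1} - v_{sigma 1}), computed in S(V). *)
Definition alt3_sum {n} (k : cochain n) (g : 'S_n) (v1 v2 v3 : V n) : {mpoly C[n]} :=
    toS (k g v2 v3) * toS (act g v1 - v1)
  + toS (k g v3 v1) * toS (act g v2 - v2)
  + toS (k g v1 v2) * toS (act g v3 - v3).

Definition pre_DOA_map {n} (k : cochain n) : Prop :=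
  [/\ linear_2cochain k,
      Sn_invariant k,
      (forall g v w, fixed_space g (k g v w))
    & forall g v1 v2 v3, alt3_sum k g v1 v2 v3 = 0].

Definition is_3cycle {n} (g : 'S_n) : bool :=
  [exists i : 'I_n, exists j : 'I_n, exists k : 'I_n,
    [&& i != j, j != k, i != k, g i == j, g j == k, g k == i &
        [forall l : 'I_n, (l \notin [:: i; j; k]) ==> (g l == l)]]].

Definition bilin_ext {n} (f : 'I_n -> 'I_n -> V n) (v w : V n) : V n :=
  \sum_(l < n) \sum_(m < n) (v 0 l * w 0 m) *: f l m.

(* For a 3-cycle g = (ijk): a(e_i+e_j+e_k) + b sum_{l notin {i,j,k}} e_l,
   i.e. a * (sum of e_l over l moved by g) + b * (sum of e_l over l fixed by g). *)
Definition tri_value {n} (a b : C) (g : 'S_n) : V n :=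
  a *: (\sum_(l < n | g l != l) e l) + b *: (\sum_(l < n | g l == l) e l).

(* Values of kappa_tri_g on basis pairs (e_l, e_m) for g = (ijk):
   (e_i,e_j),(e_j,e_k),(e_k,e_i) -- i.e. g l = m, l <> m -- give tri_value;
   the reversed pairs give -tri_value (alternating); all other pairs
   (those with e_l or e_m in V^g, or l = m) give 0. *)
Definition tri_basis {n} (a b : C) (g : 'S_n) (l m : 'I_n) : V n :=
  if (g l == m) && (l != m) then tri_value a b g
  else if (g m == l) && (l != m) then - tri_value a b g
  else 0.

Definition kappa_tri {n} (a b : C) : cochain n :=
  fun g => if is_3cycle g then bilin_ext (tri_basis a b g) else (fun _ _ => 0).

Definition kappa_one {n} (a1 : C) : cochain n :=
  fun g => if g == 1%g then bilin_ext (fun i j => a1 *: (e i - e j)) else (fun _ _ => 0).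

(* Main.v *)
Require Import Defs.
From HB Require Import structures.
From mathcomp Require Import all_boot all_order all_algebra all_fingroup.
From mathcomp Require Import complex Rstruct mpoly.
From mathcomp Require Import ring.
Import Defs.
Set Implicit Arguments.
Unset Strict Implicit.
Unset Printing Implicit Defensive.
Import GRing.Theory Num.Theory.
Local Open Scope ring_scope.

Section Basics.
Variable n : nat.
Implicit Types (u v w : V n) (g h : 'S_n) (x y : 'I_n -> C).

Lemma eE (i j : 'I_n) : (e i) 0 j = (i == j)%:R.
Proof. by rewrite /e mxE eqxx /= eq_sym. Qed.

Lemma actE h v j : (act h v) 0 j = v 0 ((h^-1)%g j).
Proof. by rewrite /act mxE. Qed.

Lemma act_e h i : act h (e i) = e (h i).
Proof.
apply/rowP => j; rewrite actE !eE; congr (_%:R).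
by rewrite (canF_eq (permK h)).
Qed.

Lemma actD h u v : act h (u + v) = act h u + act h v.
Proof. by apply/rowP => j; rewrite !(actE, mxE). Qed.

Lemma actZ h (c : C) u : act h (c *: u) = c *: act h u.
Proof. by apply/rowP => j; rewrite !(actE, mxE). Qed.

Lemma act0 h : act h 0 = 0.
Proof. by apply/rowP => j; rewrite !(actE, mxE). Qed.

Lemma actN h u : act h (- u) = - act h u.
Proof. by apply/rowP => j; rewrite !(actE, mxE). Qed.

Lemma actB h u v : act h (u - v) = act h u - act h v.
Proof. by rewrite actD actN. Qed.

Lemma act_sum h (I : finType) (P : pred I) (F : I -> V n) :
  act h (\sum_(i | P i) F i) = \sum_(i | P i) act h (F i).
Proof.
apply/rowP => j; rewrite actE !summxE; apply: eq_bigr => i _; by rewrite actE.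
Qed.

Lemma act1 v : act 1%g v = v.
Proof. by apply/rowP => j; rewrite actE invg1 perm1. Qed.

Lemma conjE h g (z : 'I_n) : ((h^-1 * g * h)%g (h z)) = h (g z).
Proof. by rewrite !permM permK. Qed.

Definition dot u x := \sum_i u 0 i * x i.

Lemma toS_eval u x : (toS u).@[x] = dot u x.
Proof.
rewrite /toS /dot; elim/big_rec2: _ => [|i a p _ <-]; first by rewrite meval0.
by rewrite mevalD mevalM mevalC mevalXU.
Qed.

Lemma dotD u v x : dot (u + v) x = dot u x + dot v x.
Proof. by rewrite /dot -big_split; apply: eq_bigr => i _; rewrite mxE mulrDl. Qed.

Lemma dotN u x : dot (- u) x = - dot u x.
Proof. by rewrite /dot -sumrN; apply: eq_bigr => i _; rewrite mxE mulNr. Qed.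

Lemma dotB u v x : dot (u - v) x = dot u x - dot v x.
Proof. by rewrite dotD dotN. Qed.

Lemma dotZ (c : C) u x : dot (c *: u) x = c * dot u x.
Proof. by rewrite /dot mulr_sumr; apply: eq_bigr => i _; rewrite mxE mulrA. Qed.

Lemma dot0 x : dot 0 x = 0.
Proof. by rewrite /dot big1 // => i _; rewrite mxE mul0r. Qed.

Lemma dot_e i x : dot (e i) x = x i.
Proof.
rewrite /dot (bigD1 i) //= eE eqxx mul1r big1 ?addr0 // => j /negbTE ji.
by rewrite eE eq_sym ji mul0r.
Qed.

Lemma dot_addx u x y : dot u (fun i => x i + y i) = dot u x + dot u y.
Proof. by rewrite /dot -big_split; apply: eq_bigr => i _; rewrite mulrDr. Qed.

Lemma dot_act g u x : dot (act g u) x = \sum_i u 0 i * x (g i).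
Proof.
rewrite /dot (reindex_inj (@perm_inj _ g)); apply: eq_bigr => i _.
by rewrite actE permK.
Qed.

Lemma dotL_inv g u y : (forall p, y (g p) = y p) -> dot (act g u - u) y = 0.
Proof.
move=> Hy; rewrite dotB dot_act /dot.
by rewrite (eq_bigr (fun i => u 0 i * y i)) ?subrr // => i _; rewrite Hy.
Qed.

Lemma dotL_e g i x : dot (act g (e i) - e i) x = x (g i) - x i.
Proof. by rewrite act_e dotB !dot_e. Qed.

Lemma selfneg u : u = - u -> u = 0.
Proof.
move=> H; have : (2 : C) *: u = 0 by rewrite scaler_nat mulr2n {1}H addNr.
by move/eqP; rewrite scaler_eq0 pnatr_eq0 /= => /eqP.
Qed.

Lemma dot_delta u p : dot u (fun i => (i == p)%:R) = u 0 p.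
Proof.
rewrite /dot (bigD1 p) //= eqxx mulr1 big1 ?addr0 // => j /negbTE ->.
by rewrite mulr0.
Qed.

Lemma dot_0x u : dot u (fun _ => 0) = 0.
Proof. by rewrite /dot big1 // => i _; rewrite mulr0. Qed.

Lemma Lz (u : V n) r s : r != s -> (forall x, dot u x * (x r - x s) = 0) -> u = 0.
Proof.
move=> rs H.
have hr : u 0 r = 0.
  have := H (fun i => (i == r)%:R); rewrite dot_delta eqxx eq_sym (negbTE rs).
  by rewrite subr0 mulr1.
apply/rowP => p; rewrite mxE.
case: (eqVneq p r) => [->//|pr].
case: (eqVneq p s) => [->|ps].
  have := H (fun i => (i == s)%:R); rewrite dot_delta eqxx (negbTE rs).
  by rewrite sub0r mulrN1 => /eqP; rewrite oppr_eq0 => /eqP.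
have := H (fun i => (i == p)%:R + (i == r)%:R); rewrite dot_addx !dot_delta hr addr0.
by rewrite [r == p]eq_sym [s == p]eq_sym (negbTE pr) eqxx (negbTE ps) eq_sym (negbTE rs) !add0r subr0 mulr1.
Qed.

Lemma Lconj g (u : V n) : (forall p, u 0 (g p) = u 0 p) ->
  (forall y, (forall p, y (g p) = y p) -> dot u y = 0) -> u = 0.
Proof.
move=> Hu Hy.
have hy : forall p, (fun p => (u 0 p)^*) (g p) = (fun p => (u 0 p)^*) p.
  by move=> p /=; rewrite Hu.
have := Hy _ hy.
rewrite /dot => H; apply/rowP => p; rewrite mxE.
have := psumr_eq0P (fun i _ => mul_conjC_ge0 (u 0 i)) H (i:=p) isT.
by move/eqP; rewrite mul_conjC_eq0 => /eqP.
Qed.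

Lemma ext_step (h : 'S_n) (z0 y : 'I_n) :
  exists h' : 'S_n, h' z0 = y /\ forall z, z != z0 -> h z != y -> h' z = h z.
Proof.
exists (h * tperm (h z0) y)%g; split; first by rewrite permM tpermL.
move=> z zz hz; rewrite permM tpermD // ?(inj_eq perm_inj) // eq_sym //.
Qed.

Lemma ext2 (i0 i1 l m : 'I_n) : i0 != i1 -> l != m ->
  exists h : 'S_n, h i0 = l /\ h i1 = m.
Proof.
move=> i01 lm; have [h1 [h1a _]] := ext_step 1%g i0 l.
have [h2 [h2a h2b]] := ext_step h1 i1 m.
by exists h2; split => //; rewrite h2b ?h1a // eq_sym.
Qed.

Lemma ext3 (i0 i1 i2 i j k : 'I_n) : i0 != i1 -> i1 != i2 -> i0 != i2 ->
  i != j -> j != k -> i != k ->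
  exists h : 'S_n, [/\ h i0 = i, h i1 = j & h i2 = k].
Proof.
move=> i01 i12 i02 ij jk ik; have [h2 [h2a h2b]] := ext2 i01 ij.
have [h3 [h3a h3b]] := ext_step h2 i2 k.
exists h3; split => //; rewrite h3b ?h2a ?h2b // eq_sym //.
Qed.

Lemma scal_selfneg (c : C) : c = - c -> c = 0.
Proof.
move=> H; have : c *+ 2 = 0 by rewrite mulr2n {1}H addNr.
by move/eqP; rewrite mulrn_eq0 /= => /eqP.
Qed.

Lemma sum_e_coord (P : pred 'I_n) q : (\sum_(l | P l) e l) 0 q = (P q)%:R.
Proof.
rewrite summxE; case: (boolP (P q)) => Pq.
  rewrite (bigD1 q) //= eE eqxx big1 ?addr0 // => l /andP [_ /negbTE lq].
  by rewrite eE lq.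
rewrite big1 // => l Pl; rewrite eE; case: eqP => // lq.
by move: Pq; rewrite -lq Pl.
Qed.

Definition c0 (i0 i1 i2 : 'I_n) : 'S_n := (tperm i0 i1 * tperm i0 i2)%g.

Definition cyc3 (g : 'S_n) (i j k : 'I_n) :=
  [/\ i != j, j != k, i != k &
   [/\ g i = j, g j = k, g k = i & forall z, z \notin [:: i; j; k] -> g z = z]].

Lemma c0_cyc3 i0 i1 i2 : i0 != i1 -> i1 != i2 -> i0 != i2 -> cyc3 (c0 i0 i1 i2) i0 i1 i2.
Proof.
move=> i01 i12 i02; split => //; split; rewrite /c0 ?permM.
- by rewrite tpermL tpermD // eq_sym.
- by rewrite tpermR tpermL.
- by rewrite (tpermD i02 i12) tpermR.
- move=> z; rewrite !inE !negb_or => /and3P [z0 z1 z2].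
  by rewrite permM !tpermD // ?(eq_sym i0) ?(eq_sym i1) ?(eq_sym i2).
Qed.

Lemma is3P g : is_3cycle g -> exists i j k, cyc3 g i j k.
Proof.
case/existsP => i /existsP [j /existsP [k H]]; exists i, j, k.
case/andP: H => ij /andP [jk /andP [ik /andP [/eqP gi /andP [/eqP gj /andP [/eqP gk /forallP H]]]]].
split => //; split => // z hz.
by apply/eqP; have := H z; rewrite hz.
Qed.

Lemma cyc3P g i j k : cyc3 g i j k -> is_3cycle g.
Proof.
case=> ij jk ik [gi gj gk H].
apply/existsP; exists i; apply/existsP; exists j; apply/existsP; exists k.
rewrite ij jk ik gi gj gk !eqxx /=; apply/forallP => z; apply/implyP => hz.
by rewrite H.
Qed.

Lemma cyc3_moved g i j k l : cyc3 g i j k -> g l != l -> [\/ l = i, l = j | l = k].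
Proof.
case=> ij jk ik [gi gj gk H] gl.
case: (boolP (l \in [:: i; j; k])) => [|hl]; last by rewrite H ?eqxx in gl.
by rewrite !inE => /or3P [/eqP ->|/eqP ->|/eqP ->]; [constructor 1|constructor 2|constructor 3].
Qed.

Lemma cyc3_conj g i j k (i0 i1 i2 : 'I_n) (h : 'S_n) : cyc3 g i j k ->
  i0 != i1 -> i1 != i2 -> i0 != i2 ->
  h i0 = i -> h i1 = j -> h i2 = k -> (h^-1 * c0 i0 i1 i2 * h)%g = g.
Proof.
move=> [ij jk ik [gi gj gk H]] i01 i12 i02 hi hj hk.
have [_ _ _ [c1 c2 c3 cH]] := c0_cyc3 i01 i12 i02.
apply/permP => z; rewrite -(permKV h z) conjE.
set z' := (h^-1)%g z.
case: (eqVneq z' i0) => [->|z0]; first by rewrite c1 hi hj.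
case: (eqVneq z' i1) => [->|z1]; first by rewrite c2 hj hk.
case: (eqVneq z' i2) => [->|z2]; first by rewrite c3 hk hi.
have hz : z' \notin [:: i0; i1; i2] by rewrite !inE !negb_or z0 z1 z2.
by rewrite cH // H // !inE -hi -hj -hk !(inj_eq perm_inj) !negb_or z0 z1 z2.
Qed.

Lemma bilin_ext_eq (f f' : 'I_n -> 'I_n -> V n) v w :
  (forall l m, f l m = f' l m) -> bilin_ext f v w = bilin_ext f' v w.
Proof.
by move=> H; apply: eq_bigr => l _; apply: eq_bigr => m _; rewrite H.
Qed.

Lemma bilin_ext0 (f : 'I_n -> 'I_n -> V n) v w :
  (forall l m, f l m = 0) -> bilin_ext f v w = 0.
Proof.
by move=> H; rewrite /bilin_ext big1 // => l _; rewrite big1 // => m _; rewrite H scaler0.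
Qed.

Lemma not3_1 : ~~ is_3cycle (1%g : 'S_n).
Proof.
apply/negP; case/is3P => i [j [k [ij _ _ [gi _ _ _]]]].
by rewrite perm1 in gi; rewrite gi eqxx in ij.
Qed.

End Basics.

Section Hard.
Variable n : nat.
Variable K : cochain n.
Hypothesis HL : linear_2cochain K.
Hypothesis HI : Sn_invariant K.
Hypothesis HF : forall g v w, fixed_space g (K g v w).
Hypothesis HA : forall g v1 v2 v3, alt3_sum K g v1 v2 v3 = 0.
Implicit Types (u v w : V n) (g h : 'S_n) (x y : 'I_n -> C).

Lemma K0l g w : K g 0 w = 0.
Proof.
case: (HL g) => H1 _ _; have h := H1 1 0 0 w; rewrite !scale1r addr0 in h.
by apply: (addrI (K g 0 w)); rewrite addr0 -h.
Qed.

Lemma K0r g v : K g v 0 = 0.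
Proof.
case: (HL g) => _ H1 _; have h := H1 1 v 0 0; rewrite !scale1r addr0 in h.
by apply: (addrI (K g v 0)); rewrite addr0 -h.
Qed.

Lemma KDl g u u' w : K g (u + u') w = K g u w + K g u' w.
Proof. by case: (HL g) => H1 _ _; have := H1 1 u u' w; rewrite !scale1r. Qed.

Lemma KDr g u w w' : K g u (w + w') = K g u w + K g u w'.
Proof. by case: (HL g) => _ H1 _; have := H1 1 u w w'; rewrite !scale1r. Qed.

Lemma KZl g (c : C) u w : K g (c *: u) w = c *: K g u w.
Proof. by case: (HL g) => H1 _ _; have := H1 c u 0 w; rewrite !addr0 K0l addr0. Qed.

Lemma KZr g (c : C) u w : K g u (c *: w) = c *: K g u w.
Proof. by case: (HL g) => _ H1 _; have := H1 c u w 0; rewrite !addr0 K0r addr0. Qed.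

Lemma Kuu g u : K g u u = 0.
Proof. by case: (HL g). Qed.

Lemma Kanti g u w : K g u w = - K g w u.
Proof.
have := Kuu g (u + w); rewrite KDl !KDr !Kuu add0r addr0 => /eqP.
by rewrite addr_eq0 => /eqP.
Qed.

Lemma KNl g u w : K g (- u) w = - K g u w.
Proof. by rewrite -scaleN1r KZl scaleN1r. Qed.

Lemma Ksuml g (c : 'I_n -> C) w :
  K g (\sum_(i < n) c i *: delta_mx 0 i) w = \sum_(i < n) c i *: K g (e i) w.
Proof.
elim/big_rec2: _ => [|i a b _ <-]; first by rewrite K0l.
by rewrite KDl KZl.
Qed.

Lemma Ksumr g (c : 'I_n -> C) v :
  K g v (\sum_(i < n) c i *: delta_mx 0 i) = \sum_(i < n) c i *: K g v (e i).
Proof.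
elim/big_rec2: _ => [|i a b _ <-]; first by rewrite K0r.
by rewrite KDr KZr.
Qed.

Lemma Kexp g v w : K g v w = bilin_ext (fun l m => K g (e l) (e m)) v w.
Proof.
rewrite {1}(row_sum_delta v) Ksuml /bilin_ext; apply: eq_bigr => l _.
rewrite {1}(row_sum_delta w) Ksumr scaler_sumr; apply: eq_bigr => m _.
by rewrite scalerA.
Qed.

Lemma Eval g v1 v2 v3 x :
  dot (K g v2 v3) x * dot (act g v1 - v1) x + dot (K g v3 v1) x * dot (act g v2 - v2) x
  + dot (K g v1 v2) x * dot (act g v3 - v3) x = 0.
Proof.
have := congr1 (meval x) (HA g v1 v2 v3).
by rewrite /alt3_sum !mevalD !mevalM !toS_eval meval0.
Qed.

Lemma Kfix g v w p : (K g v w) 0 (g p) = (K g v w) 0 p.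
Proof. by have H := HF g v w; rewrite /fixed_space in H; rewrite -{1}H actE permK. Qed.

Lemma Kinv h g v w : act h (K g v w) = K (h^-1 * g * h)%g (act h v) (act h w).
Proof. exact: HI. Qed.

Lemma Qx g v1 v2 x0 c : dot (act g v1 - v1) x0 = 0 -> dot (act g v2 - v2) x0 = 0 ->
  x0 (g c) != x0 c -> K g v1 v2 = 0.
Proof.
move=> h1 h2 hc; set u := K g v1 v2.
have key : forall y, (forall p, y (g p) = y p) -> dot u x0 + dot u y = 0.
  move=> y hy; have := Eval g v1 v2 (e c) (fun i => x0 i + y i).
  rewrite dotL_e !dot_addx h1 h2 (dotL_inv v1 hy) (dotL_inv v2 hy) hy addr0 !mulr0 !add0r.
  move/eqP; rewrite mulf_eq0 => /orP [/eqP -> //|].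
  have -> : x0 (g c) + y c - (x0 c + y c) = x0 (g c) - x0 c by ring.
  by rewrite subr_eq0 (negbTE hc).
have h0 := key (fun _ => 0) (fun _ => erefl); rewrite dot_0x addr0 in h0.
apply: (Lconj (g := g)) => [p|y hy]; first exact: Kfix.
by have := key y hy; rewrite h0 add0r.
Qed.

Lemma Pfix g v1 m c0 : g c0 != c0 -> act g v1 = v1 -> K g v1 (e m) = 0.
Proof.
move=> hc0 hv.
have Lv1 : forall x, dot (act g v1 - v1) x = 0 by move=> x; rewrite hv subrr dot0.
case: (eqVneq (g m) m) => [gm|gm].
  apply: (Qx (x0 := fun i => (i == c0)%:R) (c := c0)) => //.
    by rewrite dotL_e gm subrr.
  by rewrite eqxx (negbTE hc0) eq_sym oner_neq0.
case: (eqVneq (g (g m)) m) => [ggm|ggm]; last first.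
  apply: (Qx (x0 := fun i => (i == g (g m))%:R) (c := g m)) => //.
    rewrite dotL_e (inj_eq perm_inj) [m == g m]eq_sym (negbTE gm) [m == g (g m)]eq_sym (negbTE ggm).
    by rewrite subrr.
  by rewrite eqxx (inj_eq perm_inj) [m == g m]eq_sym (negbTE gm) oner_neq0.
set u := K g v1 (e m).
have e1 : K g v1 (e (g m)) = u.
  by have := Kinv g g v1 (e m); rewrite mulVg mul1g hv act_e => <-; apply: HF.
have e2 : K g (e (g m)) v1 = u.
  apply/eqP; rewrite -subr_eq0; apply/eqP.
  apply: (Lz (r := g m) (s := m)) => // x.
  have := Eval g v1 (e m) (e (g m)) x.
  rewrite Lv1 mulr0 add0r !dotL_e ggm dotB => H.
  by rewrite -H /u; ring.
apply: selfneg; rewrite -[in LHS]e2 Kanti e1 //.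
Qed.

Lemma Pfix_e g l m c0 : g c0 != c0 -> g l = l -> K g (e l) (e m) = 0.
Proof. by move=> hc gl; apply: (Pfix m hc); rewrite act_e gl. Qed.

Lemma moved_exists g : g != 1%g -> exists c0, g c0 != c0.
Proof.
move=> g1; case: (boolP [exists c, g c != c]) => [/existsP //|].
rewrite negb_exists => /forallP H; case/eqP: g1; apply/permP => z.
by rewrite perm1; apply/eqP; exact/negPn/(H z).
Qed.

Lemma caseA g l m : g l = m -> g m = l -> l != m -> K g (e l) (e m) = 0.
Proof.
move=> gl gm lm.
have h0 : K g (e l + e m) (e l) = 0.
  apply: (@Pfix g _ l l); first by rewrite gl eq_sym.
  by rewrite actD !act_e gl gm addrC.
rewrite KDl Kuu add0r in h0.
by rewrite Kanti h0 oppr0.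
Qed.

Lemma not3_witness g l m : g l = m -> g m != l -> l != m -> g (g m) = l ->
  ~~ is_3cycle g -> exists p, (p \notin [:: l; m; g m]) && (g p != p).
Proof.
move=> gl gml lm ggm n3.
case: (boolP [exists p, (p \notin [:: l; m; g m]) && (g p != p)]) => [/existsP //|].
rewrite negb_exists => /forallP H; case/negP: n3.
have mm : m != g m by rewrite -{1}gl (inj_eq perm_inj).
apply/existsP; exists l; apply/existsP; exists m; apply/existsP; exists (g m).
rewrite lm mm eq_sym gml gl ggm !eqxx /=; apply/forallP => q; apply/implyP => hq.
by have := H q; rewrite hq /= negbK.
Qed.

Lemma caseB g l m : g l = m -> g m != l -> l != m -> ~~ is_3cycle g -> K g (e l) (e m) = 0.
Proof.
move=> gl gml lm n3.
have mm : g m != m by rewrite -{2}gl (inj_eq perm_inj) eq_sym.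
case: (eqVneq (g (g m)) l) => [ggm|ggm].
  have [p /andP [hp gp]] := not3_witness gl gml lm ggm n3.
  move: hp; rewrite !inE !negb_or => /and3P [pl pm pgm].
  apply: (Qx (x0 := fun i => (i == p)%:R) (c := p)).
  - by rewrite dotL_e gl [m == p]eq_sym [l == p]eq_sym (negbTE pl) (negbTE pm) subrr.
  - by rewrite dotL_e [m == p]eq_sym [g m == p]eq_sym (negbTE pgm) (negbTE pm) subrr.
  - by rewrite eqxx (negbTE gp) eq_sym oner_neq0.
apply: (Qx (x0 := fun q => ((q == l) || (q == m) || (q == g m))%:R) (c := g m)).
- by rewrite dotL_e gl !eqxx /= orbT subrr.
- by rewrite dotL_e !eqxx /= !orbT subrr.
- have h1 : g (g m) != m by rewrite -{2}gl (inj_eq perm_inj).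
  have h2 : g (g m) != g m by rewrite (inj_eq perm_inj).
  by rewrite (negbTE ggm) (negbTE h1) (negbTE h2) eqxx orbT eq_sym oner_neq0.
Qed.

Lemma caseC1 g l m : g (g l) = l -> g l != l -> m != l -> m != g l ->
  K g (e l) (e m) = 0.
Proof.
move=> ggl gl ml mgl.
set h := tperm l (g l).
have hc : (h^-1 * g * h)%g = g.
  apply/permP => z; rewrite tpermV !permM /h.
  case: (tpermP l (g l) z) => [->|->|zl zgl]; first by rewrite ggl tpermL.
    by rewrite tpermR ggl.
  rewrite tpermD // eq_sym.
    by apply/eqP => hz; apply: zgl; apply: (@perm_inj _ g); rewrite hz ggl.
  by rewrite (inj_eq perm_inj); apply/eqP.
set T := K g (e l) (e m).
have h1 : act h T = K g (e (g l)) (e m).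
  by rewrite /T Kinv hc !act_e /h tpermL tpermD // eq_sym.
have h2 : K g (e l + e (g l)) (e m) = 0.
  apply: (@Pfix g _ m l) => //.
  by rewrite actD !act_e ggl addrC.
rewrite KDl in h2.
have h3 : act h T = T.
  apply/rowP => q; rewrite actE tpermV /h.
  case: (tpermP l (g l) q) => [->|->|//]; first by rewrite /T Kfix.
  by rewrite /T Kfix.
apply: selfneg; rewrite -{1}h3 h1; apply/eqP; rewrite -addr_eq0 addrC h2 //.
Qed.

Lemma caseC3 g l m : g l != l -> g m != m -> l != m -> g l != m -> g m != l ->
  g (g m) != m -> K g (e l) (e m) = 0.
Proof.
move=> gl gm lm glm gml ggm.
apply: (Qx (x0 := fun q => ((q == m) || (q == g m))%:R) (c := g m)).
  rewrite dotL_e (negbTE glm) (inj_eq perm_inj) (negbTE lm).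
  by rewrite [l == g m]eq_sym (negbTE gml) subrr.
- by rewrite dotL_e !eqxx /= orbT subrr.
- have h2 : g (g m) != g m by rewrite (inj_eq perm_inj).
  by rewrite (negbTE ggm) (negbTE h2) eqxx orbT eq_sym oner_neq0.
Qed.

Lemma Knon3 g l m : ~~ is_3cycle g -> g != 1%g -> K g (e l) (e m) = 0.
Proof.
move=> n3 g1; have [c0 hc0] := moved_exists g1.
case: (eqVneq (g l) l) => [gl|gl]; first by apply: Pfix_e hc0 gl.
case: (eqVneq (g m) m) => [gm|gm].
  by rewrite Kanti (Pfix_e l hc0 gm) oppr0.
case: (eqVneq l m) => [->|lm]; first exact: Kuu.
case: (eqVneq (g l) m) => [glm|glm].
  case: (eqVneq (g m) l) => [gml|gml]; first exact: caseA.
  exact: caseB.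
case: (eqVneq (g m) l) => [gml|gml].
  by rewrite Kanti (caseB gml) ?oppr0 // eq_sym.
case: (eqVneq (g (g l)) l) => [ggl|ggl].
  by apply: caseC1 => //; rewrite eq_sym.
case: (eqVneq (g (g m)) m) => [ggm|ggm].
  by rewrite Kanti (caseC1 ggm) ?oppr0 // eq_sym.
exact: caseC3.
Qed.

Lemma Kid (i0 i1 : 'I_n) : i0 != i1 -> forall l m,
  K 1%g (e l) (e m) = ((K 1%g (e i0) (e i1)) 0 i0) *: (e l - e m).
Proof.
move=> i01; set U := K 1%g (e i0) (e i1); set a1 := U 0 i0.
have HU : U = a1 *: (e i0 - e i1).
  set h := tperm i0 i1.
  have hU : act h U = - U.
    by rewrite /U Kinv mulg1 mulVg !act_e /h tpermL tpermR Kanti.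
  have Hq : forall q, U 0 (h q) = - U 0 q.
    by move=> q; have := congr1 (fun M : V n => M 0 q) hU; rewrite /= actE tpermV mxE.
  apply/rowP => q; rewrite !mxE /=.
  case: (eqVneq q i0) => [->|q0].
    by rewrite (negbTE i01) subr0 mulr1.
  case: (eqVneq q i1) => [->|q1].
    rewrite sub0r mulrN1.
    by have := Hq i1; rewrite /h tpermR -/a1 => ->; rewrite opprK.
  rewrite subrr mulr0.
  by apply: scal_selfneg; rewrite -Hq /h tpermD // eq_sym.
move=> l m; case: (eqVneq l m) => [->|lm]; first by rewrite Kuu subrr scaler0.
have [h [hl hm]] := ext2 i01 lm.
have := Kinv h 1%g (e i0) (e i1); rewrite mulg1 mulVg !act_e hl hm => <-.
by rewrite -/U HU actZ actB !act_e hl hm.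
Qed.

Section Tri.
Variables i0 i1 i2 : 'I_n.
Hypotheses (i01 : i0 != i1) (i12 : i1 != i2) (i02 : i0 != i2).
Let cc := c0 i0 i1 i2.
Let T0 := K cc (e i0) (e i1).
Definition aa := T0 0 i0.
Definition bb := if [pick p | p \notin [:: i0; i1; i2]] is Some p then T0 0 p else 0.

Lemma T0const p p' : p \notin [:: i0; i1; i2] -> p' \notin [:: i0; i1; i2] ->
  T0 0 p = T0 0 p'.
Proof.
move=> hp hp'.
have [_ _ _ [_ _ _ cH]] := c0_cyc3 i01 i12 i02.
set h := tperm p p'.
have hc : (h^-1 * cc * h)%g = cc.
  apply/permP => z; rewrite tpermV 2!permM /h.
  case: (tpermP p p' z) => [->|->|zp zp'].
  - by rewrite /cc !cH // tpermR.
  - by rewrite /cc !cH // tpermL.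
  rewrite tpermD //.
    by rewrite -{1}(cH _ hp) (inj_eq perm_inj) eq_sym; apply/eqP.
  by rewrite -{1}(cH _ hp') (inj_eq perm_inj) eq_sym; apply/eqP.
move: hp hp'; rewrite !inE !negb_or => /and3P [p0 p1 p2] /and3P [q0 q1 q2].
have hT : act h T0 = T0.
  by rewrite /T0 Kinv hc !act_e /h !tpermD // eq_sym.
have := congr1 (fun M : V n => M 0 p') hT; rewrite /= actE tpermV /h tpermR.
by [].
Qed.

Lemma T0a q : q \in [:: i0; i1; i2] -> T0 0 q = aa.
Proof.
have [_ _ _ [c1 c2 c3 _]] := c0_cyc3 i01 i12 i02.
rewrite !inE => /or3P [/eqP ->|/eqP ->|/eqP ->] //.
  by rewrite /aa -c1 /T0 Kfix.
by rewrite /aa -c2 /T0 Kfix -c1 Kfix.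
Qed.

Lemma K3val g i j k : cyc3 g i j k -> K g (e i) (e j) = tri_value aa bb g.
Proof.
move=> cg; case: (cg) => ij jk ik [gi gj gk gH].
have [h [hi hj hk]] := ext3 i01 i12 i02 ij jk ik.
have hc := cyc3_conj cg i01 i12 i02 hi hj hk.
have HT : act h T0 = K g (e i) (e j) by rewrite /T0 Kinv -/cc hc !act_e hi hj.
rewrite -HT; apply/rowP => q; rewrite actE !mxE !sum_e_coord.
case: (eqVneq (g q) q) => [gq|gq] /=.
  have hq : (h^-1)%g q \notin [:: i0; i1; i2].
    rewrite !inE !(canF_eq (permKV h)) hi hj hk.
    apply/negP => /or3P [/eqP qi|/eqP qj|/eqP qk].
    - by move: gq; rewrite qi gi => /eqP; rewrite eq_sym (negbTE ij).
    - by move: gq; rewrite qj gj => /eqP; rewrite eq_sym (negbTE jk).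
    - by move: gq; rewrite qk gk => /eqP; rewrite (negbTE ik).
  rewrite mulr0 add0r mulr1 /bb; case: pickP => [p' hp'|none].
    exact: T0const.
  by have := none ((h^-1)%g q); rewrite hq.
rewrite mulr1 mulr0 addr0; apply: T0a.
case: (cyc3_moved cg gq) => ->; rewrite !inE.
- by rewrite -hi permK eqxx.
- by rewrite -hj permK eqxx orbT.
- by rewrite -hk permK eqxx !orbT.
Qed.

Lemma K3 g l m : is_3cycle g -> K g (e l) (e m) = tri_basis aa bb g l m.
Proof.
move/is3P => [i [j [k cg]]]; case: (cg) => ij jk ik [gi gj gk gH].
set T := tri_value aa bb g.
have Tij : K g (e i) (e j) = T by have := K3val cg.
have hi : g i != i by rewrite gi eq_sym.
have hv : act g (e i + e j + e k) = e i + e j + e k.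
  by rewrite !actD !act_e gi gj gk addrC addrA.
have Tjk : K g (e j) (e k) = T.
  have := Pfix j hi hv; rewrite !KDl Tij Kuu addr0 => /eqP; rewrite addr_eq0 => /eqP ->.
  by rewrite -Kanti.
have Tki : K g (e k) (e i) = T.
  have := Pfix k hi hv; rewrite !KDl Tjk Kuu addr0 => /eqP.
  by rewrite addrC addr_eq0 => /eqP ->; rewrite -Kanti.
rewrite /tri_basis.
case: (eqVneq (g l) l) => [gl|gl].
  rewrite (Pfix_e m hi gl) gl andbN.
  case: (eqVneq l m) => [->|lm]; first by rewrite andbF.
  by rewrite -[X in g m == X]gl (inj_eq perm_inj) eq_sym (negbTE lm).
case: (eqVneq (g m) m) => [gm|gm].
  rewrite Kanti (Pfix_e l hi gm) oppr0 -[X in g l == X]gm (inj_eq perm_inj) andbN gm.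
  by case: (eqVneq l m).
have ij' : (i == j) = false by apply/negbTE.
have ji' : (j == i) = false by rewrite eq_sym; apply/negbTE.
have jk' : (j == k) = false by apply/negbTE.
have kj' : (k == j) = false by rewrite eq_sym; apply/negbTE.
have ik' : (i == k) = false by apply/negbTE.
have ki' : (k == i) = false by rewrite eq_sym; apply/negbTE.
case: (cyc3_moved cg gl) => ->; case: (cyc3_moved cg gm) => ->;
  rewrite ?Kuu /= ?gi ?gj ?gk ?eqxx ?ij' ?ji' ?jk' ?kj' ?ik' ?ki' /= //;
  rewrite ?Tij ?Tjk ?Tki // Kanti ?Tij ?Tjk ?Tki //.
Qed.

End Tri.

Lemma hard_main : (3 <= n)%N -> exists a1 a b : C,
  forall g v w, K g v w = kappa_one a1 g v w + kappa_tri a b g v w.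
Proof.
move=> hn.
pose i0 := Ordinal (leq_trans (isT : 0 < 3)%N hn).
pose i1 := Ordinal (leq_trans (isT : 1 < 3)%N hn).
pose i2 := Ordinal (leq_trans (isT : 2 < 3)%N hn).
have i01 : i0 != i1 by [].
have i12 : i1 != i2 by [].
have i02 : i0 != i2 by [].
exists ((K 1%g (e i0) (e i1)) 0 i0), (aa i0 i1 i2), (bb i0 i1 i2).
move=> g v w; rewrite Kexp /kappa_one /kappa_tri.
case: (eqVneq g 1%g) => [->|g1].
  rewrite (negbTE (@not3_1 n)) addr0; apply: bilin_ext_eq => l m.
  exact: Kid.
case: (boolP (is_3cycle g)) => g3 /=; rewrite add0r.
  by apply: bilin_ext_eq => l m; apply: K3.
by apply: bilin_ext0 => l m; apply: Knon3.
Qed.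

End Hard.

Section Easy.
Variable n : nat.
Implicit Types (u v w : V n) (g h : 'S_n).

Lemma alt0 : alt_bilinear (fun _ _ : V n => 0 : V n).
Proof. by split => *; rewrite ?scaler0 ?addr0. Qed.

Lemma altD (f f' : V n -> V n -> V n) : alt_bilinear f -> alt_bilinear f' ->
  alt_bilinear (fun v w => f v w + f' v w).
Proof.
case=> h1 h2 h3 [h1' h2' h3']; split.
- by move=> c u u' w; rewrite h1 h1' scalerDr addrACA.
- by move=> c u w w'; rewrite h2 h2' scalerDr addrACA.
- by move=> u; rewrite h3 h3' addr0.
Qed.

Lemma alt_bilin (f : 'I_n -> 'I_n -> V n) :
  (forall l m, f m l = - f l m) -> alt_bilinear (bilin_ext f).
Proof.
move=> fa; split.
- move=> c u u' w; rewrite /bilin_ext scaler_sumr -big_split; apply: eq_bigr => l _.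
  rewrite scaler_sumr -big_split; apply: eq_bigr => m _.
  by rewrite !mxE /= scalerA -scalerDl; congr (_ *: _); ring.
- move=> c u w w'; rewrite /bilin_ext scaler_sumr -big_split; apply: eq_bigr => l _.
  rewrite scaler_sumr -big_split; apply: eq_bigr => m _.
  by rewrite !mxE /= scalerA -scalerDl; congr (_ *: _); ring.
- move=> u; apply: selfneg.
  rewrite {1}/bilin_ext exchange_big /= -sumrN; apply: eq_bigr => l _.
  rewrite -sumrN; apply: eq_bigr => m _.
  by rewrite fa scalerN mulrC.
Qed.

Lemma bilin_ext_act h (f f' : 'I_n -> 'I_n -> V n) v w :
  (forall l m, act h (f l m) = f' (h l) (h m)) ->
  act h (bilin_ext f v w) = bilin_ext f' (act h v) (act h w).
Proof.
move=> H; rewrite /bilin_ext act_sum [RHS](reindex_inj (@perm_inj _ h)).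
apply: eq_bigr => l _; rewrite act_sum [RHS](reindex_inj (@perm_inj _ h)).
by apply: eq_bigr => m _; rewrite actZ H !actE !permK.
Qed.

Lemma bilin_ext_fix g (f : 'I_n -> 'I_n -> V n) v w :
  (forall l m, act g (f l m) = f l m) -> act g (bilin_ext f v w) = bilin_ext f v w.
Proof.
move=> H; rewrite /bilin_ext act_sum; apply: eq_bigr => l _.
by rewrite act_sum; apply: eq_bigr => m _; rewrite actZ H.
Qed.

Lemma conj_eq1 h g : ((h^-1 * g * h)%g == 1%g) = (g == 1%g).
Proof. by rewrite -mulgA -(conjg_eq1 g h). Qed.

Lemma conj3_1 h g : is_3cycle g -> is_3cycle (h^-1 * g * h)%g.
Proof.
case/is3P => i [j [k [ij jk ik [gi gj gk H]]]].
apply: (@cyc3P _ _ (h i) (h j) (h k)); split; rewrite ?(inj_eq perm_inj) //.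
split; rewrite ?conjE ?gi ?gj ?gk // => z hz.
rewrite -(permKV h z) conjE H //.
move: hz; rewrite !inE -{1}(permKV h z) -{2}(permKV h z) -{3}(permKV h z).
by rewrite !(inj_eq perm_inj).
Qed.

Lemma conj3 h g : is_3cycle (h^-1 * g * h)%g = is_3cycle g.
Proof.
apply/idP/idP; last exact: conj3_1.
move/(conj3_1 h^-1); congr is_3cycle.
by rewrite invgK !mulgA mulgV mul1g -mulgA mulgV mulg1.
Qed.

Lemma tri_value_coord (a b : C) g q :
  (tri_value a b g) 0 q = a * (g q != q)%:R + b * (g q == q)%:R.
Proof. by rewrite !mxE !sum_e_coord. Qed.

Lemma tri_value_act (a b : C) h g :
  act h (tri_value a b g) = tri_value a b (h^-1 * g * h)%g.
Proof.
have E : forall q, ((h^-1 * g * h)%g q == q) = (g ((h^-1)%g q) == (h^-1)%g q).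
  by move=> q; rewrite -[in LHS](permKV h q) conjE (inj_eq perm_inj).
by apply/rowP => q; rewrite actE !tri_value_coord !E.
Qed.

Lemma tri_value_fix (a b : C) g : act g (tri_value a b g) = tri_value a b g.
Proof. by rewrite tri_value_act mulVg mul1g. Qed.

Lemma tri_basis_act (a b : C) h g l m :
  act h (tri_basis a b g l m) = tri_basis a b (h^-1 * g * h)%g (h l) (h m).
Proof.
rewrite /tri_basis !conjE !(inj_eq perm_inj).
case: ifP => _; first exact: tri_value_act.
by case: ifP => _; rewrite ?actN ?tri_value_act ?act0.
Qed.

Lemma tri_basis_fix (a b : C) g l m : act g (tri_basis a b g l m) = tri_basis a b g l m.
Proof. by rewrite /tri_basis; case: ifP => _; last case: ifP => _; rewrite ?actN ?tri_value_fix ?act0. Qed.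

Lemma sum3 (T : zmodType) (F : 'I_n -> T) i j k : i != j -> j != k -> i != k ->
  \sum_l F l = F i + F j + F k + \sum_(l | l \notin [:: i; j; k]) F l.
Proof.
move=> ij jk ik.
rewrite (bigD1 i) //= (bigD1 j) /=; last by rewrite eq_sym.
rewrite (bigD1 k) /=; last by rewrite eq_sym ik eq_sym jk.
rewrite !addrA; congr (_ + _); apply: eq_bigl => l.
by rewrite !inE !negb_or andbA.
Qed.

Lemma tb_fixl (a b : C) g l m : g l = l -> tri_basis a b g l m = 0.
Proof.
move=> gl; rewrite /tri_basis gl andbN.
case: (eqVneq l m) => [->|lm]; first by rewrite andbF.
by rewrite -[X in g m == X]gl (inj_eq perm_inj) eq_sym (negbTE lm).
Qed.

Lemma tb_fixr (a b : C) g l m : g m = m -> tri_basis a b g l m = 0.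
Proof.
move=> gm; rewrite /tri_basis -[X in g l == X]gm (inj_eq perm_inj) andbN gm.
by case: (eqVneq l m).
Qed.

Definition Dx (i j k : 'I_n) v w :=
  v 0 i * (w 0 j - w 0 k) + v 0 j * (w 0 k - w 0 i) + v 0 k * (w 0 i - w 0 j).

Lemma tri_bilin (a b : C) g i j k v w : cyc3 g i j k ->
  bilin_ext (tri_basis a b g) v w = Dx i j k v w *: tri_value a b g.
Proof.
move=> cg; case: (cg) => ij jk ik [gi gj gk H].
have ij' : (i == j) = false by apply/negbTE.
have ji' : (j == i) = false by rewrite eq_sym; apply/negbTE.
have jk' : (j == k) = false by apply/negbTE.
have kj' : (k == j) = false by rewrite eq_sym; apply/negbTE.
have ik' : (i == k) = false by apply/negbTE.
have ki' : (k == i) = false by rewrite eq_sym; apply/negbTE.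
rewrite /bilin_ext (sum3 _ ij jk ik) [X in _ + X]big1 ?addr0; last first.
  move=> l hl; rewrite big1 // => m _; by rewrite tb_fixl ?scaler0 // H.
have inner : forall l, \sum_m (v 0 l * w 0 m) *: tri_basis a b g l m =
   (v 0 l * w 0 i) *: tri_basis a b g l i + (v 0 l * w 0 j) *: tri_basis a b g l j
   + (v 0 l * w 0 k) *: tri_basis a b g l k.
  move=> l; rewrite (sum3 _ ij jk ik) [X in _ + X]big1 ?addr0 // => m hm.
  by rewrite tb_fixr ?scaler0 // H.
rewrite !inner.
rewrite /tri_basis gi gj gk !eqxx ij' ji' jk' kj' ik' ki' /=.
by apply/rowP => q; rewrite !mxE /Dx; ring.
Qed.

Lemma toSD u w : toS (u + w) = toS u + toS w.
Proof.
by rewrite /toS -big_split; apply: eq_bigr => i _; rewrite mxE mpolyCD mulrDl.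
Qed.

Lemma toSZ (c : C) u : toS (c *: u) = c%:MP * toS u.
Proof.
by rewrite /toS mulr_sumr; apply: eq_bigr => i _; rewrite mxE mpolyCM mulrA.
Qed.

Lemma toS0 : toS (0 : V n) = 0.
Proof. by rewrite /toS big1 // => i _; rewrite mxE mpolyC0 mul0r. Qed.

Lemma alt3_vec g i j k v1 v2 v3 : cyc3 g i j k ->
  Dx i j k v2 v3 *: (act g v1 - v1) + Dx i j k v3 v1 *: (act g v2 - v2)
  + Dx i j k v1 v2 *: (act g v3 - v3) = 0.
Proof.
case=> ij jk ik [gi gj gk H].
apply/rowP => q; rewrite !mxE ?actE /Dx.
have gi' : (g^-1)%g j = i by rewrite -gi permK.
have gj' : (g^-1)%g k = j by rewrite -gj permK.
have gk' : (g^-1)%g i = k by rewrite -gk permK.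
case: (boolP (q \in [:: i; j; k])) => [|hq].
  by rewrite !inE => /or3P [/eqP ->|/eqP ->|/eqP ->]; rewrite ?gi' ?gj' ?gk'; ring.
have gq : (g^-1)%g q = q by rewrite -{1}(H q hq) permK.
by rewrite gq; ring.
Qed.

Lemma tb_anti (a b : C) g l m : is_3cycle g ->
  tri_basis a b g m l = - tri_basis a b g l m.
Proof.
case/is3P => i [j [k cg]]; case: (cg) => ij jk ik [gi gj gk H].
case: (eqVneq (g l) l) => [gl|gl]; first by rewrite tb_fixr // tb_fixl // oppr0.
case: (eqVneq (g m) m) => [gm|gm]; first by rewrite tb_fixl // tb_fixr // oppr0.
have ij' : (i == j) = false by apply/negbTE.
have ji' : (j == i) = false by rewrite eq_sym; apply/negbTE.
have jk' : (j == k) = false by apply/negbTE.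
have kj' : (k == j) = false by rewrite eq_sym; apply/negbTE.
have ik' : (i == k) = false by apply/negbTE.
have ki' : (k == i) = false by rewrite eq_sym; apply/negbTE.
case: (cyc3_moved cg gl) => ->; case: (cyc3_moved cg gm) => ->;
  rewrite /tri_basis ?gi ?gj ?gk ?eqxx ?ij' ?ji' ?jk' ?kj' ?ik' ?ki' /= ?oppr0 ?opprK //.
Qed.

Lemma alt_ext (f f' : V n -> V n -> V n) :
  (forall v w, f v w = f' v w) -> alt_bilinear f' -> alt_bilinear f.
Proof. by move=> E [h1 h2 h3]; split => *; rewrite !E. Qed.

End Easy.

Unset Implicit Arguments.

Theorem corollary4p7 (n : nat) (hn : (3 <= n)%N) (kappa : cochain n) :
  pre_DOA_map kappa <->
  exists a1 a b : C,
    forall (g : 'S_n) (v w : V n),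
      kappa g v w = kappa_one a1 g v w + kappa_tri a b g v w.
Proof.
split.
  by case=> HL HI HF HA; exact: hard_main HL HI HF HA hn.
case=> a1 [a [b H]]; split.
- move=> g; apply: (alt_ext (H g)); apply: altD.
    rewrite /kappa_one; case: eqP => _; last exact: alt0.
    by apply: alt_bilin => l m; rewrite -scalerN opprB.
  rewrite /kappa_tri; case: (boolP (is_3cycle g)) => g3; last exact: alt0.
  by apply: alt_bilin => l m; apply: tb_anti.
- move=> h g v w; rewrite !H actD.
  have E1 : act h (kappa_one a1 g v w) = kappa_one a1 (h^-1 * g * h)%g (act h v) (act h w).
    rewrite /kappa_one conj_eq1; case: eqP => _; last by rewrite act0.
    by apply: (@bilin_ext_act n h _ (fun i j => a1 *: (e i - e j))) => l m; rewrite actZ actB (act_e h l) (act_e h m).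
  have E2 : act h (kappa_tri a b g v w) = kappa_tri a b (h^-1 * g * h)%g (act h v) (act h w).
    rewrite /kappa_tri (conj3 h g); case: (is_3cycle g); last by rewrite act0.
    by apply: bilin_ext_act => l m; apply: tri_basis_act.
  by rewrite E1 E2.
- move=> g v w; rewrite /fixed_space !H actD.
  have E1 : act g (kappa_one a1 g v w) = kappa_one a1 g v w.
    by rewrite /kappa_one; case: eqP => [->|_]; rewrite ?act1 ?act0.
  have E2 : act g (kappa_tri a b g v w) = kappa_tri a b g v w.
    rewrite /kappa_tri; case: (is_3cycle g); last by rewrite act0.
    by apply: bilin_ext_fix => l m; apply: tri_basis_fix.
  by rewrite E1 E2.
- move=> g v1 v2 v3; rewrite /alt3_sum !H.
  case: (eqVneq g 1%g) => [->|g1].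
    by rewrite !act1 !subrr toS0 !mulr0 !addr0.
  rewrite /kappa_one (negbTE g1) !add0r.
  case: (boolP (is_3cycle g)) => g3; last first.
    by rewrite /kappa_tri (negbTE g3) toS0 !mul0r !addr0.
  have [i [j [k cg]]] := is3P g3.
  rewrite /kappa_tri g3 !(tri_bilin _ _ _ _ cg) !toSZ.
  have hW := congr1 toS (alt3_vec v1 v2 v3 cg); rewrite !toSD !toSZ toS0 in hW.
  transitivity (toS (tri_value a b g) *
    ((Dx i j k v2 v3)%:MP * toS (act g v1 - v1) + (Dx i j k v3 v1)%:MP * toS (act g v2 - v2)
     + (Dx i j k v1 v2)%:MP * toS (act g v3 - v3))).
    by rewrite !mulrDr; congr (_ + _ + _); rewrite mulrCA mulrA.
  by rewrite hW mulr0.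
Qed.
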